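(* Let $G=(N,A)$ be an $s$-$t$ directed graph, let $u,v\in N$ and let $k$ be a positive integer. If $u$ is the $k$-th ancestor of $v$ in the $s$-dominator tree of $G$, then $\mathrm{dom}_t(u,k)$ $t$-dominates $v$, and $v$ does not $t$-dominate $u$ unless $v=\mathrm{dom}_t(u,k)$.
   Context: An $s$-$t$ directed graph is a directed graph (not necessarily acyclic) with a unique source $s$ and unique sink $t$ such that every node is reachable from $s$ and every node reaches $t$. A node $u$ $s$-dominates $v$ if every $s$-$v$ path contains $u$ (every node $s$-dominates itself; strictly if $u\neq v$); a node $w$ $t$-dominates $v$ if every $v$-$t$ path contains $w$. For $v\ne s$ the immediate $s$-dominator of $v$ is the strict $s$-dominator of $v$ that is $s$-dominated by all strict $s$-dominators of $v$; the $s$-dominator tree is rooted at $s$ with the parent of each node being its immediate $s$-dominator. Immediate $t$-dominators and the $t$-dominator tree (rooted at $t$) are defined symmetrically. $\mathrm{dom}_t(u,k)$ denotes the $k$-th ancestor of $u$ in the $t$-dominator tree if $u$ has at least $k$ strict ancestors there, and $t$ otherwise (formally $\mathrm{dom}_t(u,1)$ is the immediate $t$-dominator of $u$ and $\mathrm{dom}_t(u,k)=\mathrm{dom}_t(\mathrm{dom}_t(u,1),k-1)$, defaulting to $t$). *)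

(* Defs.v *)
From mathcomp Require Import all_boot.
From Stdlib Require Import ClassicalEpsilon.
Set Implicit Arguments. Unset Strict Implicit. Unset Printing Implicit Defensive.

(* A directed graph on a finite node type T with edge relation e : rel T.
   A path from x to y is x :: p with [path e x p] and [last x p = y];
   its node set is x :: p. *)

Section Dominators.
Variables (T : finType) (e : rel T) (s t : T).

Definition st_graph : Prop :=
  [/\ forall x, ~~ e x s, forall x, ~~ e t x,
      forall v, connect e s v & forall v, connect e v t].

Definition sdom (u v : T) : Prop :=
  forall p, path e s p -> last s p = v -> u \in s :: p.

Definition tdom (w v : T) : Prop :=
  forall p, path e v p -> last v p = t -> w \in v :: p.

Definition is_idom_s (u v : T) : Prop :=
  v <> s /\ u <> v /\ sdom u v /\ (forall w, w <> v -> sdom w v -> sdom w u).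

Definition is_idom_t (u v : T) : Prop :=
  v <> t /\ u <> v /\ tdom u v /\ (forall w, w <> v -> tdom w v -> tdom w u).

Fixpoint sdom_anc (k : nat) (u v : T) : Prop :=
  match k with
  | 0 => u = v
  | k'.+1 => exists w, is_idom_s w v /\ sdom_anc k' u w
  end.

(* immediate t-dominator as a function, defaulting to t when it does not
   exist (i.e. for v = t) *)
Definition idom_t (v : T) : T :=
  match excluded_middle_informative (exists w, is_idom_t w v) with
  | left H => proj1_sig (constructive_indefinite_description _ H)
  | right _ => t
  end.

Definition dom_t (u : T) (k : nat) : T := iter k idom_t u.

End Dominators.

(* Main.v *)
Require Import Defs.
From mathcomp Require Import all_boot.
From Stdlib Require Import Classical ClassicalEpsilon.
Set Implicit Arguments. Unset Strict Implicit.

Lemma not_sdom (T : finType) (e : rel T) s a b : ~ sdom e s a b ->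
  exists p, [/\ path e s p, last s p = b & a \notin s :: p].
Proof.
move=> H; apply: NNPP => H2; apply: H => p pp lp.
case: (boolP (a \in s :: p)) => // Ha; exfalso; apply: H2; by exists p.
Qed.

Lemma not_tdom (T : finType) (e : rel T) t a b : ~ tdom e t a b ->
  exists p, [/\ path e b p, last b p = t & a \notin b :: p].
Proof.
move=> H; apply: NNPP => H2; apply: H => p pp lp.
case: (boolP (a \in b :: p)) => // Ha; exfalso; apply: H2; by exists p.
Qed.

Lemma simple_path (T : finType) (e : rel T) x y : connect e x y ->
  exists p, [/\ path e x p, last x p = y & uniq (x :: p)].
Proof. case/connectP => p pp ->; case/shortenP: pp => p' pp' up _; by exists p'. Qed.

Lemma tdom_t (T : finType) (e : rel T) t x : tdom e t t x.
Proof. by move=> p _ <-; apply: mem_last. Qed.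

Lemma tdom_tt (T : finType) (e : rel T) t x : tdom e t x t -> x = t.
Proof. by move=> H; have := H [::] isT erefl; rewrite inE => /eqP. Qed.

Lemma tdom_trans (T : finType) (e : rel T) t a b c :
  tdom e t a b -> tdom e t b c -> tdom e t a c.
Proof.
move=> Hab Hbc p pp lp; have := Hbc p pp lp.
move=> Hx; move: pp lp; case/splitPl: Hx => p1 p2 Hl.
rewrite cat_path last_cat Hl => /andP[_ pp2] lp.
have := Hab p2 pp2 lp; rewrite -cat_cons mem_cat inE => /orP[/eqP->|->].
  by rewrite -Hl mem_last.
by rewrite orbT.
Qed.

Lemma sdom_trans (T : finType) (e : rel T) s a b c :
  sdom e s a b -> sdom e s b c -> sdom e s a c.
Proof.
move=> Hab Hbc p pp lp; have := Hbc p pp lp.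
move=> Hx; move: pp lp; case/splitPl: Hx => p1 p2 Hl.
rewrite cat_path => /andP[pp1 _] _.
by rewrite -cat_cons mem_cat (Hab p1 pp1 Hl).
Qed.

Lemma tdom_antisym (T : finType) (e : rel T) t a b : connect e b t ->
  tdom e t a b -> tdom e t b a -> a = b.
Proof.
move=> /simple_path [p [pp lp up]] Hab Hba.
have := Hab p pp lp.
move=> Hx; move: pp lp up; case/splitPl: Hx => p1 p2 Hl.
rewrite cat_path last_cat Hl => /andP[_ pp2] lp up.
have := Hba p2 pp2 lp; rewrite inE => /orP[/eqP->//|Hb].
move: up; rewrite -cat_cons cat_uniq => /and3P[_ /hasP [] ]; exists b => //.
by rewrite inE eqxx.
Qed.

Lemma sdom_antisym (T : finType) (e : rel T) s a b : connect e s b ->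
  sdom e s a b -> sdom e s b a -> a = b.
Proof.
move=> /simple_path [p [pp lp up]] Hab Hba.
have := Hab p pp lp.
move=> Hx; move: pp lp up; case/splitPl: Hx => p1 p2 Hl.
rewrite cat_path last_cat Hl => /andP[pp1 _] lp up.
have Hb := Hba p1 pp1 Hl.
case: p2 lp up => [|y p2] lp up; first by rewrite -lp.
move: up; rewrite -cat_cons cat_uniq => /and3P[_ /hasP [] ]; exists b => //.
by rewrite -lp /= mem_last.
Qed.

Lemma idom_t_tdom (T : finType) (e : rel T) t x : tdom e t (idom_t e t x) x.
Proof.
rewrite /idom_t; case: excluded_middle_informative => [H|H]; last exact: tdom_t.
by destruct (constructive_indefinite_description _ H) as [w Hw] => /=; case: Hw => [_ [_ []]].
Qed.

Lemma idom_t_spec (T : finType) (e : rel T) t x : (exists w, is_idom_t e t w x) ->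
  is_idom_t e t (idom_t e t x) x.
Proof.
rewrite /idom_t; case: excluded_middle_informative => [H|H] H' //.
by destruct (constructive_indefinite_description _ H).
Qed.

Lemma idom_t_t (T : finType) (e : rel T) t : idom_t e t t = t.
Proof.
rewrite /idom_t; case: excluded_middle_informative => [H|H] //.
by exfalso; case: H => w [].
Qed.

Lemma idom_t_neq (T : finType) (e : rel T) t x : x <> t -> idom_t e t x <> x.
Proof.
move=> Hx; rewrite /idom_t; case: excluded_middle_informative => [H|H] //.
  by destruct (constructive_indefinite_description _ H) as [w Hw] => /=; case: Hw => [_ []].
by move=> Ht; apply: Hx.
Qed.

Lemma idom_t_exists (T : finType) (e : rel T) t x : (forall y, connect e y t) ->
  x <> t -> exists w, is_idom_t e t w x.
Proof.
move=> Hc Hxt; have [p [pp lp up]] := simple_path (Hc x).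
pose tdb y := if excluded_middle_informative (tdom e t y x) then true else false.
have tdbP y : tdb y = true <-> tdom e t y x.
  by rewrite /tdb; case: excluded_middle_informative.
have tp : t \in p.
  case: p pp lp up => [|y p] /= _ lp _; first by exfalso; apply: Hxt.
  by rewrite -lp mem_last.
have hp : has tdb p by apply/hasP; exists t => //; apply/tdbP; apply: tdom_t.
set idx := find tdb p; set a := nth x p idx.
have ia : idx < size p by rewrite -has_find.
have ta : tdb a by apply: nth_find.
have ap : a \in p by apply: mem_nth.
have xna : x <> a.
  by move=> xa; move: up; rewrite /= xa ap.
have Ep : p = rcons (take idx p) a ++ drop idx.+1 p by rewrite -take_nth // cat_take_drop.
exists a; split => //; split; first by move=> H; apply: xna.
split; first by apply/tdbP.
move=> w wx Hw Q pQ lQ.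
have Hpre : path e x (rcons (take idx p) a).
  by move: pp; rewrite {1}Ep cat_path => /andP[].
have := Hw (rcons (take idx p) a ++ Q).
rewrite cat_path Hpre last_rcons pQ last_cat last_rcons lQ => /(_ isT erefl).
rewrite inE (negbTE (introN eqP wx)) /= mem_cat mem_rcons inE.
idtac.
case/orP => [/orP[Hwa|Hin]|HQ]; [by rewrite inE Hwa | | by rewrite inE HQ orbT].
exfalso.
have ji : index w (take idx p) < idx.
  have := index_mem w (take idx p); by rewrite Hin size_take ia.
have := before_find x ji.
rewrite -(nth_take x ji) nth_index //.
by move/tdbP: Hw => ->.
Qed.

Lemma chain_uniq (T : eqType) (R : T -> T -> Prop) (g : nat -> T) n :
  (forall a b, R a b -> R b a -> a = b) ->
  (forall j j', j <= j' -> j' <= n -> R (g j') (g j)) ->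
  (forall j, j < n -> g j.+1 <> g j) -> uniq [seq g j | j <- iota 0 n.+1].
Proof.
move=> Ha Hc Hn; rewrite map_inj_in_uniq ?iota_uniq //.
have key i j : i < j -> j <= n -> g i = g j -> False.
  move=> ij jn E; apply: (Hn i (leq_trans ij jn)).
  apply: Ha; first by apply: Hc => //; exact: leq_trans ij jn.
  by rewrite E; apply: Hc.
move=> i j; rewrite !mem_iota /= !add0n !ltnS => Hi Hj E.
case: (ltngtP i j) => // ij; exfalso.
  exact: (key i j).
exact: (key j i).
Qed.

Lemma W_tdom (T : finType) (e : rel T) t u j j' : j <= j' ->
  tdom e t (dom_t e t u j') (dom_t e t u j).
Proof.
move=> /subnKC <-; elim: (j' - j) => [|d IH]; first by rewrite addn0 => p _ _; rewrite inE eqxx.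
rewrite addnS /dom_t iterS; apply: tdom_trans IH; exact: idom_t_tdom.
Qed.

Lemma W_t (T : finType) (e : rel T) t u j j' : j <= j' ->
  dom_t e t u j = t -> dom_t e t u j' = t.
Proof.
move=> /subnKC <- H; elim: (j' - j) => [|d IH]; first by rewrite addn0.
by rewrite addnS /dom_t iterS -/(dom_t e t u (j + d)) IH idom_t_t.
Qed.

Lemma W_mem (T : finType) (e : rel T) t u x : (forall y, connect e y t) ->
  tdom e t x u -> forall n,
  (exists m, m < n /\ x = dom_t e t u m) \/ tdom e t x (dom_t e t u n).
Proof.
move=> Hc Hx; elim=> [|n [[m [mn E]]|IH]]; first by right.
  by left; exists m; split => //; apply: ltnW.
case: (classic (x = dom_t e t u n)) => [E|Hne].
  by left; exists n.
right; have Hnt : dom_t e t u n <> t.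
  by move=> Ht; apply: Hne; rewrite Ht; move: IH; rewrite Ht => /tdom_tt.
have [_ [_ [_ Hid]]] := idom_t_spec (idom_t_exists Hc Hnt).
by rewrite /dom_t iterS; apply: Hid.
Qed.

Lemma F_chain (T : finType) (e : rel T) s k u v : sdom_anc e s k u v ->
  exists f : nat -> T, [/\ f 0 = v, f k = u &
     forall j, j < k -> is_idom_s e s (f j.+1) (f j)].
Proof.
elim: k v => [|k IH] v /=; first by move=> ->; exists (fun _ => v).
case=> w [Hw /IH [f [f0 fk fi]]].
exists (fun j => if j is j'.+1 then f j' else v); split => //.
  by case=> [|j] /=; [rewrite f0 | move=> /fi].
Qed.

Lemma F_sdom (T : finType) (e : rel T) s (f : nat -> T) k :
  (forall j, j < k -> is_idom_s e s (f j.+1) (f j)) ->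
  forall j j', j <= j' -> j' <= k -> sdom e s (f j') (f j).
Proof.
move=> Hf j j' /subnKC <-; elim: (j' - j) => [|d IH]; first by rewrite addn0 => _ p _ <-; apply: mem_last.
rewrite addnS => Hk; apply: sdom_trans (IH (ltnW Hk)).
by have [_ [_ []]] := Hf _ Hk.
Qed.

Lemma F_mem (T : finType) (e : rel T) s (f : nat -> T) k x :
  (forall j, j < k -> is_idom_s e s (f j.+1) (f j)) ->
  sdom e s x (f 0) -> forall n, n <= k ->
  (exists m, m < n /\ x = f m) \/ sdom e s x (f n).
Proof.
move=> Hf Hx; elim=> [|n IH] Hn; first by right.
case: (IH (ltnW Hn)) => [[m [mn E]]|H].
  by left; exists m; split => //; apply: ltnW.
case: (classic (x = f n)) => [E|Hne]; first by left; exists n.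
by right; have [_ [_ [_ Hid]]] := Hf _ Hn; apply: Hid.
Qed.

Lemma L_sdom_v (T : finType) (e : rel T) s t u v x P :
  sdom e s u v -> tdom e t x u -> path e v P -> last v P = t ->
  x \notin v :: P -> sdom e s x v.
Proof.
move=> Huv Hxu pP lP xP R pR lR.
have Hu := Huv R pR lR; move: pR lR; case/splitPl: Hu => r1 r2 Hl.
rewrite cat_path Hl => /andP[_ pr2]; rewrite last_cat Hl => lr2.
have := Hxu (r2 ++ P); rewrite cat_path pr2 lr2 pP last_cat lr2 lP => /(_ isT erefl).
rewrite -cat_cons mem_cat => /orP[H|H]; last first.
  by move: xP; rewrite inE H orbT.
move: H; rewrite -cat_cons mem_cat inE => /orP[/eqP->|->]; last by rewrite orbT.
by rewrite -Hl mem_last.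
Qed.

Lemma L_contra (T : finType) (e : rel T) s t u v x P :
  connect e s v -> sdom e s u v -> sdom e s x u -> x <> u -> tdom e t x u ->
  path e v P -> last v P = t -> x \notin v :: P -> False.
Proof.
move=> /simple_path [R [pR lR uR]] Huv Hxu xu Htd pP lP xP.
have Hu := Huv R pR lR; move: pR lR uR; case/splitPl: Hu => r1 r2 Hl.
rewrite cat_path => /andP[pr1 pr2]; rewrite last_cat Hl => lr2 uR.
rewrite Hl in pr2.
have Hx1 := Hxu r1 pr1 Hl.
have := Htd (r2 ++ P); rewrite cat_path pr2 lr2 pP last_cat lr2 lP => /(_ isT erefl).
rewrite inE mem_cat (introF eqP xu) /= => /orP[H|H]; last first.
  by move: xP; rewrite inE H orbT.
move: uR; rewrite -cat_cons cat_uniq => /and3P[_ /hasP []]; by exists x.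
Qed.

Lemma L1 (T : finType) (e : rel T) s t u v x :
  connect e s u -> sdom e s u x -> sdom e s x v -> x <> u -> tdom e t v u ->
  tdom e t x u.
Proof.
move=> Hc Hux Hxv xu Hvu.
have : ~ sdom e s x u by move=> H; apply: xu; apply: sdom_antisym Hc H Hux.
case/not_sdom => S [pS lS xS] Q pQ lQ.
have Hv := Hvu Q pQ lQ; move: pQ lQ; case/splitPl: Hv => q1 q2 Hl.
rewrite cat_path => /andP[pq1 _] _.
have := Hxv (S ++ q1); rewrite cat_path pS lS pq1 last_cat lS Hl => /(_ isT erefl).
rewrite -cat_cons mem_cat (negbTE xS) /= => H.
by rewrite inE mem_cat H !orbT.
Qed.

Lemma L2 (T : finType) (e : rel T) s t u v x :
  connect e s x -> sdom e s u x -> sdom e s x v -> x <> v -> tdom e t v u ->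
  tdom e t v x.
Proof.
move=> Hc Hux Hxv xv Hvu.
have : ~ sdom e s v x by move=> H; apply: xv; symmetry; apply: sdom_antisym Hc H Hxv.
case/not_sdom => S [pS lS vS] R pR lR.
have Hu := Hux S pS lS; move: pS lS vS; case/splitPl: Hu => s1 s2 Hl.
rewrite cat_path Hl => /andP[_ ps2]; rewrite last_cat Hl => ls2 vS.
have := Hvu (s2 ++ R); rewrite cat_path ps2 ls2 pR last_cat ls2 lR => /(_ isT erefl).
rewrite -cat_cons mem_cat => /orP[H|H]; last by rewrite inE H orbT.
exfalso; move: vS; rewrite -cat_cons mem_cat.
move: H; rewrite inE => /orP[/eqP->|->]; last by rewrite orbT.
by rewrite -Hl mem_last.
Qed.

Lemma chain_neq (T : eqType) (R : T -> T -> Prop) (g : nat -> T) n :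
  (forall a b, R a b -> R b a -> a = b) ->
  (forall j j', j <= j' -> j' <= n -> R (g j') (g j)) ->
  (forall j, j < n -> g j.+1 <> g j) ->
  forall i j, i < j -> j <= n -> g i <> g j.
Proof.
move=> Ha Hc Hn i j ij jn E; apply: (Hn i (leq_trans ij jn)).
apply: Ha; first by apply: Hc => //; exact: leq_trans ij jn.
by rewrite E; apply: Hc.
Qed.

Lemma inj_uniq (T : eqType) (g : nat -> T) a b n :
  (forall i j, i < j -> j <= n -> g i <> g j) -> a + b <= n.+1 ->
  uniq [seq g j | j <- iota a b].
Proof.
move=> Hn Hab; rewrite map_inj_in_uniq ?iota_uniq //.
move=> i j; rewrite !mem_iota => /andP[_ Hi] /andP[_ Hj] E.
have Hi' : i <= n by rewrite -ltnS; exact: leq_trans Hi Hab.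
have Hj' : j <= n by rewrite -ltnS; exact: leq_trans Hj Hab.
case: (ltngtP i j) => // ij; exfalso.
  exact: (Hn i j).
exact: (Hn j i).
Qed.

Theorem lemma3 (T : finType) (e : rel T) (s t : T) (u v : T) (k : nat) :
  st_graph e s t -> 0 < k -> sdom_anc e s k u v ->
  tdom e t (dom_t e t u k) v /\
  (tdom e t v u -> v = dom_t e t u k).
Proof.
move=> [Hs Ht Hcs Hct] k0 Hanc.
have [f [f0 fk fi]] := F_chain Hanc.
have Ftd := F_sdom fi.
have Huv : sdom e s u v by rewrite -f0 -fk; apply: Ftd.
have Fneq : forall i j, i < j -> j <= k -> f i <> f j.
  apply: (chain_neq (R := sdom e s)) => //.
    by move=> a b H1 H2; apply: sdom_antisym (Hcs b) H1 H2.
  by move=> j jk; have [_ [H _]] := fi j jk.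
have P1 : tdom e t (dom_t e t u k) v.
  apply: NNPP => Hn.
  have Hn' j : j <= k -> ~ tdom e t (dom_t e t u j) v.
    by move=> jk H; apply: Hn; apply: tdom_trans (W_tdom jk) H.
  have Wkt : dom_t e t u k <> t by move=> H; apply: Hn; rewrite H; apply: tdom_t.
  have Wnt j : j < k -> dom_t e t u j <> t.
    by move=> jk H; apply: Wkt; apply: W_t (ltnW jk) H.
  have Wneq : forall i j, i < j -> j <= k -> dom_t e t u i <> dom_t e t u j.
    apply: (chain_neq (R := tdom e t)).
    - by move=> a b H1 H2; apply: tdom_antisym (Hct b) H1 H2.
    - by move=> j j' jj' _; apply: W_tdom.
    - by move=> j jk; apply: idom_t_neq; apply: Wnt.
  have Hsub : {subset [seq dom_t e t u j | j <- iota 1 k] <= [seq f m | m <- iota 1 k.-1]}.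
    move=> y /mapP [j]; rewrite mem_iota => /andP[j1 jk] ->.
    have jk' : j <= k by move: jk; rewrite add1n ltnS.
    have [P [pP lP xP]] := not_tdom (Hn' j jk').
    have Wu : tdom e t (dom_t e t u j) u := W_tdom (leq0n j).
    have Hxs := L_sdom_v Huv Wu pP lP xP.
    have xu : dom_t e t u j <> u := fun E => Wneq 0 j j1 jk' (esym E).
    have Hxs' : sdom e s (dom_t e t u j) (f 0) by rewrite f0.
    case: (F_mem fi Hxs' (leqnn k)) => [[m [mk E]]|H].
      rewrite E; apply: map_f; rewrite mem_iota.
      case: m mk E => [|m] mk E.
        by move: xP; rewrite E f0 inE eqxx.
      by rewrite /= add1n prednK.
    exfalso; rewrite fk in H; exact: (L_contra (Hcs v) Huv H xu Wu pP lP xP).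
  have := uniq_leq_size (inj_uniq Wneq (eq_leq (add1n k))) Hsub.
  by rewrite !size_map !size_iota; case: k k0 {Hn Hn' Wkt Wnt Wneq Hsub fk fi Ftd Hanc Fneq f0 Huv} => // k _; rewrite ltnn.
split => // Hvu.
case: (W_mem Hct Hvu k) => [[m [mk E]]|H]; last by apply: tdom_antisym (Hct _) H P1.
exfalso.
have [i /eqP Wi Hmin] := ex_minnP (ex_intro (fun i => dom_t e t u i == v) m (introT eqP (esym E))).
have im : i <= m by apply: Hmin; rewrite -E.
have Wnt j : j < i -> dom_t e t u j <> t.
  move=> ji H; have Wit := W_t (ltnW ji) H.
  have : i <= j by apply: Hmin; rewrite H -Wit Wi.
  by rewrite leqNgt ji.
have Wneq : forall a b, a < b -> b <= i -> dom_t e t u a <> dom_t e t u b.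
  apply: (chain_neq (R := tdom e t)).
  - by move=> a b H1 H2; apply: tdom_antisym (Hct b) H1 H2.
  - by move=> j j' jj' _; apply: W_tdom.
  - by move=> j jk; apply: idom_t_neq; apply: Wnt.
have Hsub : {subset [seq f j | j <- iota 0 k.+1] <= [seq dom_t e t u m | m <- iota 0 i.+1]}.
  move=> y /mapP [j]; rewrite mem_iota add0n ltnS => /andP[_ jk] ->.
  case: j jk => [|j] jk.
    by rewrite f0 -Wi; apply: map_f; rewrite mem_iota leq0n add0n ltnSn.
  case: (ltngtP j.+1 k) jk => // jk _; last first.
    by rewrite jk fk; apply: (map_f (fun m => dom_t e t u m) (x := 0)); rewrite mem_iota.
  have xu : f j.+1 <> u by rewrite -fk; apply: Fneq.
  have xv : f j.+1 <> v by rewrite -f0 => E'; apply: (Fneq 0 j.+1) => //; apply: ltnW.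
  have Hux : sdom e s u (f j.+1) by rewrite -fk; apply: Ftd => //; apply: ltnW.
  have Hxv : sdom e s (f j.+1) v by rewrite -f0; apply: Ftd => //; apply: ltnW.
  have H1 := L1 (Hcs u) Hux Hxv xu Hvu.
  have H2 := L2 (Hcs _) Hux Hxv xv Hvu.
  case: (W_mem Hct H1 i) => [[m' [m'i E']]|H3].
    by rewrite E'; apply: map_f; rewrite mem_iota /= add0n ltnS ltnW.
  by exfalso; apply: xv; rewrite Wi in H3; apply: tdom_antisym (Hct _) H3 H2.
have := uniq_leq_size (inj_uniq Fneq (eq_leq (add0n k.+1))) Hsub.
rewrite !size_map !size_iota ltnS => ki.
by have := leq_ltn_trans (leq_trans ki im) mk; rewrite ltnn.
Qed.
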